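(* Assume that each $f_m^j$ is $L$-smooth. In the setting described in the context, for every meta-epoch $t$, $$\Big\|\frac1R\sum_{r=0}^{R-1}\frac1C\sum_{m\in S_t^{\lambda_r}}\frac1N\sum_{j=0}^{N-1}\nabla f_m^{\pi_m^j}(x^{r,j}_{m,t})\Big\|^2\le 2L^2V_t+4L\big(f(x_t)-f(x_\star)\big),$$ where $V_t=\frac{1}{RCN}\sum_{r=0}^{R-1}\sum_{m\in S_t^{\lambda_r}}\sum_{j=0}^{N-1}\|x_t-x^{r,j}_{m,t}\|^2$.
   Context: Setting. There are $M$ clients, each holding $N$ data points. For $m\in[M]$ and $j\in\{0,\dots,N-1\}$, $f_m^j:\mathbb{R}^d\to\mathbb{R}$ is differentiable. Define $f_m=\frac1N\sum_j f_m^j$ and $f=\frac1M\sum_m f_m$, and let $x_\star$ be a minimizer of $f$. $L$-smooth means the gradient is $L$-Lipschitz. Algorithm RR-CLI. Let $C$ be a cohort size with $M=CR$, and let $\gamma,\eta,\theta>0$. In meta-epoch $t$: - The clients are partitioned into $R$ disjoint cohorts of size $C$, taken in order $S_t^{\lambda_0},\dots,S_t^{\lambda_{R-1}}$. - Each client $m$ has a permutation $\pi_m=(\pi_m^0,\dots,\pi_m^{N-1})$ of its data indices. - Set $x_t^0=x_t$. For $r=0,\dots,R-1$ and $m\in S_t^{\lambda_r}$, set $x^{r,0}_{m,t}=x^r_t$ and $x^{r,j+1}_{m,t}=x^{r,j}_{m,t}-\gamma\nabla f_m^{\pi_m^j}(x^{r,j}_{m,t})$ for $j=0,\dots,N-1$.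 - The server sets $x^{r+1}_t=x^r_t-\eta\frac1C\sum_{m\in S_t^{\lambda_r}}\frac{x^r_t-x^{r,N}_{m,t}}{\gamma N}$. - Finally, $x_{t+1}=x_t-\theta\frac{x_t-x^R_t}{\eta R}$. *)

(* Defs.v *)
From HB Require Import structures.
From mathcomp Require Import all_boot all_order all_algebra.
From mathcomp Require Import fingroup perm.
From mathcomp Require Import all_classical all_reals all_analysis.
Set Implicit Arguments. Unset Strict Implicit. Unset Printing Implicit Defensive.
Import Order.TTheory GRing.Theory Num.Theory.
Import numFieldNormedType.Exports.
Local Open Scope ring_scope.

Section RRCLI.
Variables (R : realType) (d : nat).

Definition sqnorm (v : 'rV[R]_d) : R := \sum_(i < d) (v 0 i) ^+ 2.
Definition enorm (v : 'rV[R]_d) : R := Num.sqrt (sqnorm v).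

Definition grad (f : 'rV[R]_d -> R) (x : 'rV[R]_d) : 'rV[R]_d :=
  \row_(i < d) 'D_(delta_mx 0 i) f x.

Definition L_smooth (L : R) (f : 'rV[R]_d -> R) : Prop :=
  (forall x, differentiable f x) /\
  (forall x y, enorm (grad f x - grad f y) <= L * enorm (x - y)).

(* local iterates x^{r,j}: x^{0} = x0, x^{j+1} = x^j - gamma g_j(x^j), j < N,
   where g j = gradient of f_m^{pi_m^j} *)
Fixpoint local_iter (N : nat) (gamma : R) (g : 'I_N -> 'rV[R]_d -> 'rV[R]_d)
  (x0 : 'rV[R]_d) (j : nat) : 'rV[R]_d :=
  match j with
  | 0 => x0
  | j'.+1 => let y := local_iter gamma g x0 j' in
             match (insub j' : option 'I_N) with
             | Some o => y - gamma *: g o y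
             | None => y
             end
  end.

(* server iterates x^r_t within one meta-epoch;
   S r = cohort S_t^{lambda_r}, G m j x = gradient of f_m^{pi_m^j} at x *)
Fixpoint server_iter (M N C Rn : nat) (gamma eta : R)
  (S : 'I_Rn -> {set 'I_M}) (G : 'I_M -> 'I_N -> 'rV[R]_d -> 'rV[R]_d)
  (xt : 'rV[R]_d) (r : nat) : 'rV[R]_d :=
  match r with
  | 0 => xt
  | r'.+1 => let y := server_iter C gamma eta S G xt r' in
             match (insub r' : option 'I_Rn) with
             | Some o => y - eta *: ((C%:R)^-1 *:
                   \sum_(m in S o) ((gamma * N%:R)^-1 *:
                       (y - local_iter gamma (G m) y N)))
             | None => y
             end
  end.

Fixpoint meta_iter (M N C Rn : nat) (gamma eta theta : R)
  (S : nat -> 'I_Rn -> {set 'I_M}) (G : nat -> 'I_M -> 'I_N -> 'rV[R]_d -> 'rV[R]_d)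
  (x0 : 'rV[R]_d) (t : nat) : 'rV[R]_d :=
  match t with
  | 0 => x0
  | t'.+1 => let x := meta_iter C gamma eta theta S G x0 t' in
             x - (theta / (eta * Rn%:R)) *:
                   (x - server_iter C gamma eta (S t') (G t') x Rn)
  end.

Definition favg (M N : nat) (f : 'I_M -> 'I_N -> 'rV[R]_d -> R) (x : 'rV[R]_d) : R :=
  (M%:R)^-1 * \sum_(m < M) ((N%:R)^-1 * \sum_(j < N) f m j x).

End RRCLI.

(* Main.v *)
Require Import Defs.
From HB Require Import structures.
From mathcomp Require Import all_boot all_order all_algebra.
From mathcomp Require Import fingroup perm.
From mathcomp Require Import all_classical all_reals all_analysis.
From mathcomp Require Import ring lra.
Import Order.TTheory GRing.Theory Num.Theory.
Import numFieldNormedType.Exports.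
Local Open Scope ring_scope.

Definition dot {R : realType} {d : nat} (u v : 'rV[R]_d) : R :=
  \sum_(i < d) u 0 i * v 0 i.

Lemma Dgrad {R : realType} {d : nat} (f : 'rV[R]_d -> R) p v :
  differentiable f p -> 'D_v f p = dot (grad f p) v.
Proof.
move=> df; rewrite deriveE // {1}(row_sum_delta v) linear_sum /dot.
apply: eq_bigr => i _; rewrite linearZ /= -deriveE // /grad mxE.
by rewrite mulrC.
Qed.
Lemma phi_derive {R : realType} {d : nat} (f : 'rV[R]_d -> R) x v s :
  differentiable f (s *: v + x) ->
  is_derive s 1 (fun t : R => f (t *: v + x)) (dot (grad f (s *: v + x)) v).
Proof.
move=> df.
have E : (fun h : R => h^-1 *: (((fun t : R => f (t *: v + x)) \o shift s) (h *: 1) - f (s *: v + x)))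
   = (fun h : R => h^-1 *: ((f \o shift (s *: v + x)) (h *: v) - f (s *: v + x))).
  apply/funext => h /=; congr (_ *: (f _ - _)).
  by rewrite [h%:A]mulr1 scalerDl addrA.
apply: DeriveDef.
  rewrite /derivable E; exact: diff_derivable.
by rewrite /derive E -/(derive f (s *: v + x) v) Dgrad.
Qed.
Lemma quad_derive {R : realType} (c K t : R) :
  is_derive t 1 (fun s : R => s * c + K * s ^+ 2) (c + 2 * K * t).
Proof.
have h1 : is_derive t 1 ((@id R) * cst c) (id t *: 0 + cst c t *: 1).
  exact: is_deriveM.
have h2 : is_derive t 1 ((cst K) * (@id R) ^+ 2)
   (cst K t *: ((2%:R * id t ^+ 1) *: 1) + ((@id R) ^+ 2) t *: 0).
  apply: is_deriveM; exact: is_deriveX.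
change (is_derive t 1 (((@id R) * cst c) + ((cst K) * (@id R) ^+ 2)) (c + 2 * K * t)).
have h3 := is_deriveD h1 h2.
apply: is_derive_eq h3 _.
rewrite /= !scaler0 add0r addr0 [c%:A]mulr1 [(_)%:A]mulr1 [K *: _]/(K * _) expr1.
by change (c + K * (2 * t) = c + 2 * K * t); ring.
Qed.
Lemma sqnorm_ge0 {R : realType} {d : nat} (u : 'rV[R]_d) : 0 <= sqnorm u.
Proof. by apply: sumr_ge0 => i _; rewrite sqr_ge0. Qed.

Lemma dotBl {R : realType} {d : nat} (u w v : 'rV[R]_d) :
  dot (u - w) v = dot u v - dot w v.
Proof.
rewrite /dot -sumrB; apply: eq_bigr => i _; rewrite !mxE; ring.
Qed.

Lemma sqnormZ {R : realType} {d : nat} (a : R) (u : 'rV[R]_d) :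
  sqnorm (a *: u) = a ^+ 2 * sqnorm u.
Proof.
rewrite /sqnorm mulr_sumr; apply: eq_bigr => i _; rewrite !mxE; ring.
Qed.

Lemma dot_le {R : realType} {d : nat} (u v : 'rV[R]_d) (a : R) :
  0 <= a -> sqnorm u <= a ^+ 2 * sqnorm v -> dot u v <= a * sqnorm v.
Proof.
rewrite le_eqVlt => /orP [/eqP a0|apos] H.
  rewrite -a0 mul0r; move: H; rewrite -a0 expr0n /= mul0r => H.
  have H0 : sqnorm u = 0 by apply/eqP; rewrite eq_le H sqnorm_ge0.
  move/eqP: H0; rewrite /sqnorm psumr_eq0; last by move=> i _; rewrite sqr_ge0.
  move/allP => Hu; rewrite /dot big1 // => i _.
  have := Hu i (mem_index_enum _); rewrite sqrf_eq0 => /eqP ->; by rewrite mul0r.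
have H2 : 2 * dot u v <= sqnorm u / a + a * sqnorm v.
  rewrite /dot /sqnorm mulr_sumr mulr_suml mulr_sumr -big_split /=.
  apply: ler_sum => i _.
  set p := u 0 i; set q := v 0 i.
  have -> : p ^+ 2 / a + a * q ^+ 2 = 2 * (p * q) + (p - a * q) ^+ 2 / a.
    by field; rewrite gt_eqF.
  by rewrite lerDl divr_ge0 // ?sqr_ge0 // ltW.
have H3 : sqnorm u / a <= a * sqnorm v.
  rewrite ler_pdivrMr //; by rewrite mulrC mulrA -expr2.
lra.
Qed.
Lemma descent {R : realType} {d : nat} (f : 'rV[R]_d -> R) (L : R) x y :
  0 <= L -> L_smooth L f ->
  f y <= f x + dot (grad f x) (y - x) + L / 2 * sqnorm (y - x).
Proof.
move=> L0 [df Lf].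
set v := y - x; set c0 := dot (grad f x) v; set K := L / 2 * sqnorm v.
pose g := fun s : R => s * c0 + K * s ^+ 2.
pose psi : R -> R := (fun t : R => f (t *: v + x)) - g.
have dpsi (t : R) : is_derive t 1 psi (dot (grad f (t *: v + x)) v - (c0 + 2 * K * t)).
  apply: is_deriveB; [exact: phi_derive | exact: quad_derive].
have key : psi 1 <= psi 0.
  apply: (@ler0_derive1_le_cc _ psi 0 1) => //.
  - move=> t; rewrite in_itv /= => /andP [t0 t1].
    rewrite derive1E derive_val subr_le0.
    suff: dot (grad f (t *: v + x) - grad f x) v <= 2 * K * t by rewrite dotBl /c0; lra.
    have -> : 2 * K * t = (L * t) * sqnorm v by rewrite /K; field.
    apply: dot_le; first by rewrite mulr_ge0 // ltW.
    have := Lf (t *: v + x) x; rewrite addrK.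
    set u := grad f (t *: v + x) - grad f x => H.
    have e1 : enorm u ^+ 2 = sqnorm u by rewrite sqr_sqrtr // sqnorm_ge0.
    have e2 : enorm (t *: v) ^+ 2 = t ^+ 2 * sqnorm v.
      by rewrite sqr_sqrtr ?sqnorm_ge0 // sqnormZ.
    have a0 : 0 <= enorm u by exact: sqrtr_ge0.
    rewrite -e1 exprMn -mulrA -e2 -exprMn.
    rewrite ler_sqr //; rewrite nnegrE mulr_ge0 //; exact: sqrtr_ge0.
  - apply: derivable_within_continuous => t _.
    have [H _] := dpsi t; exact: H.
  - by rewrite in_itv /= ler01 lexx.
  - by rewrite in_itv /= ler01 lexx.
move: key; rewrite /psi /g !fctE /= scale1r scale0r add0r subrK.
rewrite /c0 /K; lra.
Qed.
Lemma sum_sq_le {R : realType} (I : finType) (A : {pred I}) (y : I -> R) :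
  (\sum_(i in A) y i) ^+ 2 <= #|A|%:R * \sum_(i in A) y i ^+ 2.
Proof.
rewrite expr2 mulr_suml.
under eq_bigr do rewrite mulr_sumr.
apply: (@le_trans _ _ (\sum_(i in A) \sum_(k in A) (y i ^+ 2 + y k ^+ 2) / 2)).
  apply: ler_sum => i _; apply: ler_sum => k _.
  have := sqr_ge0 (y i - y k); lra.
set Q := \sum_(i in A) y i ^+ 2.
have E : \sum_(i in A) \sum_(k in A) (y i ^+ 2 + y k ^+ 2) / 2
    = \sum_(i in A) (y i ^+ 2 *+ #|A| + Q) / 2.
  by apply: eq_bigr => i _; rewrite -mulr_suml big_split /= sumr_const.
rewrite E -mulr_suml big_split /= sumr_const -sumrMnl.
rewrite [X in X <= _](_ : _ = #|A|%:R * Q) //.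
rewrite sumrMnl -/Q -mulr_natr; by field.
Qed.
Lemma jensen {R : realType} {d : nat} (I : finType) (A : {pred I}) (a : I -> 'rV[R]_d) :
  sqnorm (#|A|%:R^-1 *: \sum_(i in A) a i) <= #|A|%:R^-1 * \sum_(i in A) sqnorm (a i).
Proof.
set c := #|A|%:R^-1.
rewrite /sqnorm exchange_big /= mulr_sumr; apply: ler_sum => k _.
rewrite mxE summxE exprMn.
have Hc : c ^+ 2 * #|A|%:R = c.
  rewrite /c; case: (posnP #|A|) => [->|hp]; first by rewrite invr0 expr0n mul0r.
  by field; rewrite pnatr_eq0 -lt0n.
rewrite -[in X in _ <= X]Hc -mulrA ler_wpM2l ?sqr_ge0 //.
exact: sum_sq_le.
Qed.

Lemma jensen_ord {R : realType} {d : nat} (n : nat) (a : 'I_n -> 'rV[R]_d) :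
  sqnorm (n%:R^-1 *: \sum_(i < n) a i) <= n%:R^-1 * \sum_(i < n) sqnorm (a i).
Proof.
have := @jensen R d 'I_n predT a.
rewrite cardT size_enum_ord.
by [].
Qed.

Lemma sqnorm_add2 {R : realType} {d : nat} (a b : 'rV[R]_d) :
  sqnorm (a + b) <= 2 * sqnorm a + 2 * sqnorm b.
Proof.
rewrite /sqnorm !mulr_sumr -big_split /=; apply: ler_sum => i _; rewrite mxE.
have := sqr_ge0 (a 0 i - b 0 i); lra.
Qed.
Lemma part_sum {V : zmodType} {M Rn : nat} (S : 'I_Rn -> {set 'I_M}) (F : 'I_M -> V) :
  (forall r1 r2, r1 != r2 -> [disjoint S r1 & S r2]) ->
  (forall m, exists r, m \in S r) ->
  \sum_(r < Rn) \sum_(m in S r) F m = \sum_(m < M) F m.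
Proof.
move=> Hd Hc.
under eq_bigr do rewrite big_mkcond.
rewrite exchange_big; apply: eq_bigr => m _ /=.
have [r0 Hr0] := Hc m.
rewrite (bigD1 r0) //= Hr0 big1 ?addr0 // => r Hr.
by rewrite (disjointFr (Hd r0 r _) Hr0) // eq_sym.
Qed.

Lemma dot_sum {R : realType} {d : nat} (I : Type) (s : seq I) (P : pred I)
  (u : I -> 'rV[R]_d) v :
  dot (\sum_(i <- s | P i) u i) v = \sum_(i <- s | P i) dot (u i) v.
Proof.
rewrite /dot; under eq_bigr do rewrite summxE mulr_suml.
by rewrite exchange_big.
Qed.

Lemma dotZl {R : realType} {d : nat} (c : R) (u v : 'rV[R]_d) :
  dot (c *: u) v = c * dot u v.
Proof. by rewrite /dot mulr_sumr; apply: eq_bigr => i _; rewrite mxE mulrA. Qed.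

Lemma dotZr {R : realType} {d : nat} (c : R) (u v : 'rV[R]_d) :
  dot u (c *: v) = c * dot u v.
Proof. by rewrite /dot mulr_sumr; apply: eq_bigr => i _; rewrite mxE; ring. Qed.

Lemma dot_self {R : realType} {d : nat} (u : 'rV[R]_d) : dot u u = sqnorm u.
Proof. by rewrite /dot /sqnorm; apply: eq_bigr => i _; rewrite expr2. Qed.

Lemma real_bound {R : realType} (B D L : R) :
  0 <= B -> 0 <= L -> (forall s, 0 <= D - s * B + L / 2 * s ^+ 2 * B) ->
  B <= 2 * L * D.
Proof.
move=> B0 L0 H.
have D0 : 0 <= D by have := H 0; rewrite !mul0r expr0n /= !mulr0 mul0r; lra.
move: L0; rewrite le_eqVlt => /orP [/eqP L0'|Lpos]; last first.
  have := H L^-1; rewrite expr2.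
  have -> : D - L^-1 * B + L / 2 * (L^-1 * L^-1) * B = D - B / (2 * L).
    by field; rewrite gt_eqF.
  rewrite subr_ge0 ler_pdivrMr ?mulr_gt0 //; lra.
rewrite -L0' mulr0 mul0r.
move: B0; rewrite le_eqVlt => /orP [/eqP <-|Bpos]; first exact: lexx.
have := H ((D + 1) / B); rewrite -L0' !mul0r addr0 divfK ?gt_eqF //; lra.
Qed.

Lemma sqnorm_lip {R : realType} {d : nat} (L : R) (u w : 'rV[R]_d) :
  0 <= L -> enorm u <= L * enorm w -> sqnorm u <= L ^+ 2 * sqnorm w.
Proof.
move=> L0 H.
have e1 : enorm u ^+ 2 = sqnorm u by rewrite sqr_sqrtr // sqnorm_ge0.
have e2 : enorm w ^+ 2 = sqnorm w by rewrite sqr_sqrtr // sqnorm_ge0.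
rewrite -e1 -e2 -exprMn ler_sqr //; rewrite nnegrE ?mulr_ge0 //; exact: sqrtr_ge0.
Qed.
Lemma avg_descent {R : realType} {d : nat} (M N : nat)
  (f : 'I_M -> 'I_N -> 'rV[R]_d -> R) (L : R) x y :
  (0 < M)%N -> (0 < N)%N -> 0 <= L -> (forall m j, L_smooth L (f m j)) ->
  favg f y <= favg f x
     + dot (M%:R^-1 *: \sum_(m < M) (N%:R^-1 *: \sum_(j < N) grad (f m j) x)) (y - x)
     + L / 2 * sqnorm (y - x).
Proof.
move=> Mp Np L0 Hs.
set K := L / 2 * sqnorm (y - x).
have NR : (N%:R : R) != 0 by rewrite pnatr_eq0 -lt0n.
have MR : (M%:R : R) != 0 by rewrite pnatr_eq0 -lt0n.
apply: (@le_trans _ _ (M%:R^-1 * \sum_(m < M) (N%:R^-1 * \sum_(j < N)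
     (f m j x + dot (grad (f m j) x) (y - x) + K)))).
  rewrite /favg ler_wpM2l ?invr_ge0 ?ler0n //; apply: ler_sum => m _.
  rewrite ler_wpM2l ?invr_ge0 ?ler0n //; apply: ler_sum => j _.
  exact: descent.
have E1 m : N%:R^-1 * \sum_(j < N) (f m j x + dot (grad (f m j) x) (y - x) + K)
   = N%:R^-1 * \sum_(j < N) f m j x
     + dot (N%:R^-1 *: \sum_(j < N) grad (f m j) x) (y - x) + K.
  rewrite dotZl dot_sum !big_split /= sumr_const card_ord -mulr_natr.
  by field.
under eq_bigr do rewrite E1.
rewrite !big_split /= sumr_const card_ord -mulr_natr dotZl dot_sum /favg.
rewrite le_eqVlt; apply/orP; left; apply/eqP; by field.
Qed.

Lemma sqnorm0 {R : realType} {d : nat} : sqnorm (0 : 'rV[R]_d) = 0.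
Proof. by rewrite /sqnorm big1 // => i _; rewrite mxE expr0n. Qed.

Lemma sqnormN {R : realType} {d : nat} (u : 'rV[R]_d) : sqnorm (- u) = sqnorm u.
Proof. by rewrite -scaleN1r sqnormZ sqrrN expr1n mul1r. Qed.

Theorem lemma7 (R : realType) (d M N C Rn : nat)
  (f : 'I_M -> 'I_N -> 'rV[R]_d -> R) (L gamma eta theta : R)
  (S : nat -> 'I_Rn -> ({set 'I_M})) (pi : nat -> 'I_M -> ({perm 'I_N}))
  (x0 xstar : 'rV[R]_d) :
  M = (C * Rn)%N ->
  0 < gamma -> 0 < eta -> 0 < theta ->
  (forall t r, #|S t r| = C) ->
  (forall t r1 r2, r1 != r2 -> [disjoint S t r1 & S t r2]) ->
  (forall t m, exists r, m \in S t r) ->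
  (forall m j, L_smooth L (f m j)) ->
  (forall x, favg f xstar <= favg f x) ->
  forall t : nat,
  let G := fun t m j => grad (f m (pi t m j)) in
  let xt := meta_iter C gamma eta theta S G x0 t in
  let xloc := fun (r : 'I_Rn) (m : 'I_M) (j : 'I_N) =>
      local_iter gamma (G t m) (server_iter C gamma eta (S t) (G t) xt r) j in
  let Vt := (Rn%:R * C%:R * N%:R)^-1 *
      \sum_(r < Rn) \sum_(m in S t r) \sum_(j < N) sqnorm (xt - xloc r m j) in
  sqnorm ((Rn%:R)^-1 *: \sum_(r < Rn) ((C%:R)^-1 *: \sum_(m in S t r)
            ((N%:R)^-1 *: \sum_(j < N) G t m j (xloc r m j))))
  <= 2 * L ^+ 2 * Vt + 4 * L * (favg f xt - favg f xstar).
Proof.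
move=> HM g0 e0 th0 Hcard Hdisj Hcov Hsm Hopt t; cbv zeta.
set G := fun t m j => grad (f m (pi t m j)).
set xt := meta_iter C gamma eta theta S G x0 t.
set xloc := fun (r : 'I_Rn) (m : 'I_M) (j : 'I_N) =>
      local_iter gamma (G t m) (server_iter C gamma eta (S t) (G t) xt r) j.
set Vt := (Rn%:R * C%:R * N%:R)^-1 * _.
have [d0|dpos] := posnP d.
  have sq0 (u : 'rV[R]_d) : sqnorm u = 0.
    by rewrite /sqnorm big1 // => i _; have : (i < 0)%N by rewrite -d0 ltn_ord.
  have -> : xt = xstar by apply/rowP => i; have : (i < 0)%N by rewrite -d0 ltn_ord.
  have -> : Vt = 0.
    rewrite /Vt big1 ?mulr0 // => r _; rewrite big1 // => m _.
    by rewrite big1 // => j _.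
  by rewrite sq0 subrr !mulr0 addr0.
have [Hemp|[Mp Np]] : (forall (m : 'I_M) (j : 'I_N), False) \/ ((0 < M)%N /\ (0 < N)%N).
  case: (posnP M) => [M0|Mp]; first by left => m; have : (m < 0)%N by rewrite -M0 ltn_ord.
  case: (posnP N) => [N0|Np]; first by left => m j; have : (j < 0)%N by rewrite -N0 ltn_ord.
  by right.
  have -> : \sum_(r < Rn) C%:R^-1 *: \sum_(m in S t r)
       N%:R^-1 *: \sum_(j < N) G t m j (xloc r m j) = 0.
    apply: big1 => r _; rewrite big1 ?scaler0 // => m _.
    by rewrite big1 ?scaler0 // => j _; case: (Hemp m j).
  have -> : Vt = 0.
    rewrite /Vt big1 ?mulr0 // => r _; rewrite big1 // => m _.
    by rewrite big1 // => j _; case: (Hemp m j).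
  have Hf x : favg f x = 0.
    rewrite /favg big1 ?mulr0 // => m _.
    by rewrite big1 ?mulr0 // => j _; case: (Hemp m j).
  by rewrite !Hf scaler0 sqnorm0 subrr !mulr0 addr0.
have L0 : 0 <= L.
  have [_ Lf] := Hsm (Ordinal Mp) (Ordinal Np).
  have := Lf 0 (const_mx 1); rewrite sub0r.
  have hs : sqnorm (- const_mx 1 : 'rV[R]_d) = d%:R.
    rewrite /sqnorm (eq_bigr (fun _ => 1)); last by move=> i _; rewrite !mxE sqrrN expr1n.
    by rewrite sumr_const card_ord.
  have hpos : 0 < enorm (- const_mx 1 : 'rV[R]_d).
    by rewrite /enorm hs sqrtr_gt0 ltr0n.
  have hge : 0 <= enorm (grad (f (Ordinal Mp) (Ordinal Np)) 0
                 - grad (f (Ordinal Mp) (Ordinal Np)) (const_mx 1)) by exact: sqrtr_ge0.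
  move=> H; rewrite leNgt; apply/negP => Lneg.
  have : L * enorm (- const_mx 1 : 'rV[R]_d) < 0 by rewrite pmulr_llt0.
  lra.
set A := Rn%:R^-1 *: \sum_(r < Rn) C%:R^-1 *: \sum_(m in S t r)
       N%:R^-1 *: \sum_(j < N) (G t m j (xloc r m j) - G t m j xt).
set B := Rn%:R^-1 *: \sum_(r < Rn) C%:R^-1 *: \sum_(m in S t r)
       N%:R^-1 *: \sum_(j < N) G t m j xt.
have -> : Rn%:R^-1 *: \sum_(r < Rn) C%:R^-1 *: \sum_(m in S t r)
       N%:R^-1 *: \sum_(j < N) G t m j (xloc r m j) = A + B.
  rewrite /A /B -scalerDr -big_split /=; congr (_ *: _); apply: eq_bigr => r _.
  rewrite -scalerDr -big_split /=; congr (_ *: _); apply: eq_bigr => m _.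
  rewrite -scalerDr -big_split /=; congr (_ *: _); apply: eq_bigr => j _.
  by rewrite subrK.
have hB : sqnorm B <= 2 * L * (favg f xt - favg f xstar).
  have Hperm m : \sum_(j < N) G t m j xt = \sum_(j < N) grad (f m j) xt.
    by rewrite [RHS](reindex_inj (@perm_inj _ (pi t m))).
  set b := M%:R^-1 *: \sum_(m < M) (N%:R^-1 *: \sum_(j < N) grad (f m j) xt).
  have Bb : B = b.
    rewrite /B /b.
    under eq_bigr => r _ do under eq_bigr => m _ do rewrite Hperm.
    rewrite -scaler_sumr (part_sum (S t) _ (Hdisj t) (Hcov t)) scalerA -invfM -natrM.
    by rewrite mulnC -HM.
  rewrite Bb; apply: real_bound => //; first exact: sqnorm_ge0.
  move=> s.
  have h1 := Hopt (xt - s *: b).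
  have h2 := @avg_descent R d M N f L xt (xt - s *: b) Mp Np L0 Hsm.
  have e : xt - s *: b - xt = (- s) *: b by rewrite addrAC subrr add0r scaleNr.
  move: h2; rewrite -/b e; clearbody b; rewrite dotZr dot_self sqnormZ sqrrN.
  move=> h2.
  have -> : L / 2 * s ^+ 2 * sqnorm b = L / 2 * (s ^+ 2 * sqnorm b) by rewrite mulrA.
  lra.
have hA : sqnorm A <= L ^+ 2 * Vt.
  apply: le_trans (jensen_ord _ (fun r : 'I_Rn => C%:R^-1 *: \sum_(m in S t r)
       N%:R^-1 *: \sum_(j < N) (G t m j (xloc r m j) - G t m j xt))) _.
  apply: (@le_trans _ _ (Rn%:R^-1 * \sum_(r < Rn) (C%:R^-1 * \sum_(m in S t r)
      (N%:R^-1 * \sum_(j < N) sqnorm (G t m j (xloc r m j) - G t m j xt))))).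
    rewrite ler_wpM2l ?invr_ge0 ?ler0n //; apply: ler_sum => r _.
    have := @jensen R d 'I_M (S t r) (fun m => N%:R^-1 *: \sum_(j < N) (G t m j (xloc r m j) - G t m j xt)).
    rewrite Hcard => H; apply: le_trans H _.
    rewrite ler_wpM2l ?invr_ge0 ?ler0n //; apply: ler_sum => m _.
    exact: jensen_ord.
  apply: (@le_trans _ _ (Rn%:R^-1 * \sum_(r < Rn) (C%:R^-1 * \sum_(m in S t r)
      (N%:R^-1 * \sum_(j < N) (L ^+ 2 * sqnorm (xt - xloc r m j)))))).
    rewrite ler_wpM2l ?invr_ge0 ?ler0n //; apply: ler_sum => r _.
    rewrite ler_wpM2l ?invr_ge0 ?ler0n //; apply: ler_sum => m _.
    rewrite ler_wpM2l ?invr_ge0 ?ler0n //; apply: ler_sum => j _.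
    rewrite -opprB sqnormN; apply: sqnorm_lip => //.
    exact: (Hsm m (pi t m j)).2.
  rewrite /Vt !mulr_sumr le_eqVlt; apply/orP; left; apply/eqP.
  apply: eq_bigr => r _; rewrite !mulr_sumr; apply: eq_bigr => m _.
  rewrite !mulr_sumr; apply: eq_bigr => j _.
  rewrite !invfM; ring.
apply: le_trans (sqnorm_add2 A B) _.
lra.
Qed.
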